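(* Let $L_1$ and $L_2$ be distinct lines in the plane meeting at a point ${\bf a}$. Let $2\theta$ be the measure of the smaller angle between the two lines, and let $\phi$ be the angle between the line through ${\bf a}$ parallel to the $x$-axis and the line bisecting the smaller angle between $L_1$ and $L_2$. Then the subset of $\mathbb{R}^3$ generated by $L_1,L_2$ is the HR-cone $(R_\phi\Lambda_\theta R_{-\phi},{\bf a})$, i.e. the set of $(x,y,z)$ with $z^2=({\bf x}-{\bf a})^TR_\phi\Lambda_\theta R_{-\phi}({\bf x}-{\bf a})$, ${\bf x}=(x,y)^T$.
   Context: For distinct lines $L_1,L_2$ in the plane, the subset of $\mathbb{R}^3$ generated by them is the set of all points $(x,y,\pm z)$ such that $2z$ is the length of a line segment with one endpoint on $L_1$, the other on $L_2$, and midpoint $(x,y)$. For real $\phi$ and $0<\theta<\pi/2$: $R_\phi=\begin{bmatrix}\cos\phi&-\sin\phi\\ \sin\phi&\cos\phi\end{bmatrix}$ and $\Lambda_\theta=\begin{bmatrix}\tan^2\theta&0\\0&\cot^2\theta\end{bmatrix}$. For a symmetric positive definite $2\times2$ matrix $A$ with $\det A=1$ and ${\bf a}\in\mathbb{R}^2$, the HR-cone $(A,{\bf a})$ is $\{(x,y,z): z^2=({\bf x}-{\bf a})^TA({\bf x}-{\bf a})\}$. *)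

(* Defs.v *)
From mathcomp Require Import all_boot all_order all_algebra.
From mathcomp Require Import all_classical all_reals.
From mathcomp Require Import trigo.
Set Implicit Arguments. Unset Strict Implicit. Unset Printing Implicit Defensive.
Import Order.TTheory GRing.Theory Num.Theory.
Local Open Scope ring_scope.
Local Open Scope classical_set_scope.

Section Defs.
Variable R : realType.

Definition pt (x y : R) : 'cV[R]_2 := \col_(i < 2) (if i == 0 then x else y).

Definition len (v : 'cV[R]_2) : R := Num.sqrt (v 0 0 ^+ 2 + v 1 0 ^+ 2).

Definition dir (t : R) : 'cV[R]_2 := pt (cos t) (sin t).

Definition line (p d : 'cV[R]_2) : set 'cV[R]_2 := [set p + s *: d | s in [set: R]].

(* R^3 is modelled as R^2 x R : (x, y, z) ~ (pt x y, z) *)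
(* the subset of R^3 generated by L1, L2: all (x,y,+-z) with 2z the length of a
   segment with one endpoint on L1, the other on L2, and midpoint (x,y) *)
Definition generated (L1 L2 : set 'cV[R]_2) : set ('cV[R]_2 * R) :=
  [set xz | exists p q, L1 p /\ L2 q /\ xz.1 = 2^-1 *: (p + q) /\
      (xz.2 = len (p - q) / 2 \/ xz.2 = - (len (p - q) / 2))].

Definition rotmx (phi : R) : 'M[R]_2 :=
  \matrix_(i < 2, j < 2)
    (if i == 0 then (if j == 0 then cos phi else - sin phi)
     else (if j == 0 then sin phi else cos phi)).

Definition cot (t : R) : R := cos t / sin t.

Definition Lambda (t : R) : 'M[R]_2 :=
  \matrix_(i < 2, j < 2)
    (if i == j then (if i == 0 then tan t ^+ 2 else cot t ^+ 2) else 0).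

Definition HRcone (A : 'M[R]_2) (a : 'cV[R]_2) : set ('cV[R]_2 * R) :=
  [set xz | xz.2 ^+ 2 = (((xz.1 - a)^T *m A *m (xz.1 - a)) 0 0)].

End Defs.

(* Main.v *)
Require Import Defs.
From mathcomp Require Import all_boot all_order all_algebra.
From mathcomp Require Import all_classical all_reals.
From mathcomp Require Import trigo.
From mathcomp Require Import ring lra.
Import Order.TTheory GRing.Theory Num.Theory.
Local Open Scope ring_scope.
Local Open Scope classical_set_scope.

Lemma alg (R : realType) (c d C S T K s t : R) : c^+2 + d^+2 = 1 -> T*C = S -> K*S = C ->
  T^+2*(c*((s*(c*C - d*S) + t*(c*C+d*S))/2) + d*((s*(d*C+c*S) + t*(d*C - c*S))/2))^+2
  + K^+2*(-d*((s*(c*C - d*S) + t*(c*C+d*S))/2) + c*((s*(d*C+c*S) + t*(d*C - c*S))/2))^+2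
  = ((s*(c*C-d*S) - t*(c*C+d*S))^+2 + (s*(d*C+c*S) - t*(d*C-c*S))^+2)/4.
Proof.
move=> e hT hK.
have -> : c*((s*(c*C - d*S) + t*(c*C+d*S))/2) + d*((s*(d*C+c*S) + t*(d*C - c*S))/2)
   = (s+t)*C/2 * (c^+2+d^+2) by field.
have -> : -d*((s*(c*C - d*S) + t*(c*C+d*S))/2) + c*((s*(d*C+c*S) + t*(d*C - c*S))/2)
   = (s-t)*S/2 * (c^+2+d^+2) by field.
have -> : (s*(c*C-d*S) - t*(c*C+d*S))^+2 + (s*(d*C+c*S) - t*(d*C-c*S))^+2
   = ((s-t)^+2 * C^+2 + (s+t)^+2 * S^+2) * (c^+2+d^+2) by ring.
rewrite e !mulr1.
have -> : T^+2 * ((s+t)*C/2)^+2 = (T*C)^+2 * ((s+t)/2)^+2 by field.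
have -> : K^+2 * ((s-t)*S/2)^+2 = (K*S)^+2 * ((s-t)/2)^+2 by field.
by rewrite hT hK; field.
Qed.
Lemma sum2 (R : realType) (F : 'I_2 -> R) : \sum_(j < 2) F j = F 0 + F 1.
Proof. rewrite !big_ord_recl big_ord0 addr0; congr (_ + F _); exact/val_inj. Qed.

Lemma qformE (R : realType) (theta phi : R) (v : 'cV[R]_2) :
  ((v^T *m (rotmx phi *m Lambda theta *m rotmx (- phi)) *m v) 0 0) =
  tan theta ^+ 2 * (cos phi * v 0 0 + sin phi * v 1 0) ^+ 2 +
  cot theta ^+ 2 * (- sin phi * v 0 0 + cos phi * v 1 0) ^+ 2.
Proof.
rewrite !(mxE, sum2) /= cosN sinN.
move: (tan theta) (cot theta) (cos phi) (sin phi) (v 0 0) (v 1 0) => a b c d x y; ring.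
Qed.

Lemma cV2P (R : realType) (v w : 'cV[R]_2) :
  v 0 0 = w 0 0 -> v 1 0 = w 1 0 -> v = w.
Proof.
move=> h0 h1; apply/matrixP => i j; rewrite [j]ord1.
case: i => [[|[|//]]] Hi.
- by rewrite (_ : Ordinal Hi = 0) //; apply/val_inj.
- by rewrite (_ : Ordinal Hi = 1) //; apply/val_inj.
Qed.

Lemma comp0 (R : realType) (a0 X Y c d C S : R) : c^+2 + d^+2 = 1 -> C != 0 -> S != 0 ->
  a0 + X = 2^-1 * (a0 + ((c * X + d * Y) / C + (- d * X + c * Y) / S) * (c * C - d * S)
     + (a0 + ((c * X + d * Y) / C - (- d * X + c * Y) / S) * (c * C + d * S))).
Proof. move=> e C1 S1; transitivity (a0 + X * (c^+2+d^+2)); first by rewrite e mulr1. by field; rewrite C1 S1. Qed.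

Lemma comp1 (R : realType) (a0 X Y c d C S : R) : c^+2 + d^+2 = 1 -> C != 0 -> S != 0 ->
  a0 + Y = 2^-1 * (a0 + ((c * X + d * Y) / C + (- d * X + c * Y) / S) * (d * C + c * S)
     + (a0 + ((c * X + d * Y) / C - (- d * X + c * Y) / S) * (d * C - c * S))).
Proof. move=> e C1 S1; transitivity (a0 + Y * (c^+2+d^+2)); first by rewrite e mulr1. by field; rewrite C1 S1. Qed.

Lemma fwd (R : realType) (a : 'cV[R]_2) (theta phi s t : R) :
  0 < cos theta -> 0 < sin theta ->
  let p := a + s *: dir (phi + theta) in let q := a + t *: dir (phi - theta) in
  (((2^-1 *: (p + q) - a)^T *m (rotmx phi *m Lambda theta *m rotmx (- phi))
     *m (2^-1 *: (p + q) - a)) 0 0) = len (p - q) ^+ 2 / 4.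
Proof.
move=> C0 S0 p q.
rewrite qformE /len sqr_sqrtr ?addr_ge0 ?sqr_ge0 //.
rewrite /p /q !mxE /= cosD sinD cosB sinB.
have e := cos2Dsin2 phi.
have hT : tan theta * cos theta = sin theta by rewrite /tan mulfVK // gt_eqF.
have hK : cot theta * sin theta = cos theta by rewrite /cot mulfVK // gt_eqF.
apply: etrans (etrans (@alg R _ _ _ _ _ _ s t e hT hK) _).
  by congr (_ * (_ ^+ 2) + _ * (_ ^+ 2)); field.
by move: (a 0 0) (a 1 0) => a0 a1; field.
Qed.

Theorem theorem3p3 (R : realType) (a : 'cV[R]_2) (theta phi : R)
  (L1 L2 : set 'cV[R]_2) :
  0 < theta -> theta <= pi / 4 ->
  L1 = line a (dir (phi + theta)) ->
  L2 = line a (dir (phi - theta)) ->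
  generated L1 L2 = HRcone (rotmx phi *m Lambda theta *m rotmx (- phi)) a.
Proof.
move=> th0 th4 -> ->.
have pi0 := pi_gt0 R.
have C0 : 0 < cos theta by apply: cos_gt0_pihalf; apply/andP; split; lra.
have S0 : 0 < sin theta by apply: sin_gt0_pi; apply/andP; split; lra.
apply/seteqP; split => -[x z] /=.
- move=> [p [q [[s _ <-] [[t _ <-] [/= -> hz]]]]].
  rewrite /HRcone /= fwd //.
  by case: hz => ->; rewrite ?sqrrN; field.
- rewrite /HRcone /= => hz.
  set X := (x - a) 0 0; set Y := (x - a) 1 0.
  pose w1 := cos phi * X + sin phi * Y; pose w2 := - sin phi * X + cos phi * Y.
  pose s := w1 / cos theta + w2 / sin theta; pose t := w1 / cos theta - w2 / sin theta.
  exists (a + s *: dir (phi + theta)), (a + t *: dir (phi - theta)).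
  have e := cos2Dsin2 phi.
  have hx : x = 2^-1 *: (a + s *: dir (phi + theta) + (a + t *: dir (phi - theta))).
    have hX : x 0 0 = a 0 0 + X by rewrite /X !mxE; ring.
    have hY : x 1 0 = a 1 0 + Y by rewrite /Y !mxE; ring.
    apply: cV2P; rewrite ?hX ?hY !mxE /= ?cosD ?sinD ?cosN ?sinN ?mulrN ?opprK /s /t /w1 /w2.
      exact: (@comp0 R (a 0 0) X Y _ _ (cos theta) (sin theta) e (negbT (gt_eqF C0)) (negbT (gt_eqF S0))).
    exact: (@comp1 R (a 1 0) X Y _ _ (cos theta) (sin theta) e (negbT (gt_eqF C0)) (negbT (gt_eqF S0))).
  split; first by exists s.
  split; first by exists t.
  split => //.
  move: hz; rewrite hx fwd // => /eqP.
  have -> : len (a + s *: dir (phi + theta) - (a + t *: dir (phi - theta))) ^+ 2 / 4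
    = (len (a + s *: dir (phi + theta) - (a + t *: dir (phi - theta))) / 2) ^+ 2 by field.
  by rewrite eqf_sqr => /orP [/eqP -> | /eqP ->]; [left | right].
Qed.
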